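(* Let $R$ be an associative ring with identity and involution $*$, and let $a\in R^{\#}\cap R^{\dagger}$. Then $a\in R^{SEP}$ if and only if $(aa^*a^{\dagger}a^{\dagger}a^2)^k\in PE(R)$ for both $k=2$ and $k=3$.
   Context: An involution on $R$ is a map $x\mapsto x^*$ with $(x^* )^*=x$, $(x+y)^*=x^*+y^*$, $(xy)^*=y^*x^*$. An element $a$ is Moore–Penrose invertible if there is $b$ with $aba=a$, $bab=b$, $(ab)^*=ab$, $(ba)^*=ba$; such $b$ is unique, denoted $a^{\dagger}$, and $R^{\dagger}$ is the set of such $a$. An element $a$ is group invertible if there is $b$ with $aba=a$, $bab=b$, $ab=ba$; such $b$ is unique, denoted $a^{\#}$, and $R^{\#}$ is the set of such $a$. $PE(R)=\{e\in R: e^2=e=e^*\}$ is the set of projections. For $a\in R^{\#}\cap R^{\dagger}$, $a$ is SEP if $a^*=a^{\dagger}=a^{\#}$; $R^{SEP}$ denotes the set of SEP elements. *)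

(* Defs.v *)
From HB Require Import structures.
From mathcomp Require Import all_boot all_algebra.
Set Implicit Arguments. Unset Strict Implicit. Unset Printing Implicit Defensive.
Import GRing.Theory.
Local Open Scope ring_scope.

Definition is_involution (R : pzRingType) (s : R -> R) : Prop :=
  [/\ forall x, s (s x) = x,
      forall x y, s (x + y) = s x + s y
    & forall x y, s (x * y) = s y * s x].

Definition is_MP_inverse (R : pzRingType) (s : R -> R) (a b : R) : Prop :=
  [/\ a * b * a = a, b * a * b = b, s (a * b) = a * b & s (b * a) = b * a].

Definition is_group_inverse (R : pzRingType) (a b : R) : Prop :=
  [/\ a * b * a = a, b * a * b = b & a * b = b * a].

Definition is_projection (R : pzRingType) (s : R -> R) (e : R) : Prop :=
  e * e = e /\ s e = e.

(* a is SEP: a is group and MP invertible and a^* = a^dagger = a^#.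
   (Both inverses are unique, so "exists" is equivalent to "for all".) *)
Definition is_SEP (R : pzRingType) (s : R -> R) (a : R) : Prop :=
  exists b c, [/\ is_MP_inverse s a b, is_group_inverse a c, s a = b & b = c].

(* Main.v *)
Require Import Defs.
From mathcomp Require Import all_boot all_algebra.
Local Open Scope ring_scope.
Import GRing.Theory.

Lemma mp_unique (R : pzRingType) (s : R -> R) (a b c : R) :
  is_involution s -> is_MP_inverse s a b -> is_MP_inverse s a c -> b = c.
Proof.
move=> [ss sD sM] [b1 b2 b3 b4] [c1 c2 c3 c4].
have sa1 : s a = s a * s (a * c) by rewrite -sM c1.
have sa2 : s a = s (b * a) * s a by rewrite -sM mulrA b1.
have Eb : b = b * a * c.
  transitivity (b * (s b * (s a * s (a * c)))); first by rewrite -sa1 -sM b3 mulrA b2.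
  by rewrite (mulrA (s b)) -sM b3 c3 !mulrA b2.
have Ec : c = b * a * c.
  transitivity ((s (b * a) * s a) * s c * c); first by rewrite -sa2 -sM c4 c2.
  by rewrite -(mulrA _ (s a)) -sM b4 c4 -[in RHS]c2 !mulrA.
by rewrite Eb -Ec.
Qed.

Ltac pre H := let u := fresh "u" in move=> u; have := congr1 (fun v => u * v) H; rewrite /= !mulrA; apply.

Theorem theorem4p2 (R : pzRingType) (s : R -> R) (a ad ag : R) :
  is_involution s ->
  is_MP_inverse s a ad ->
  is_group_inverse a ag ->
  (is_SEP s a <->
   (is_projection s ((a * s a * ad * ad * a ^+ 2) ^+ 2) /\
    is_projection s ((a * s a * ad * ad * a ^+ 2) ^+ 3))).
Proof.
move=> inv mpd gpg; have [ss sD sM] := inv; have [H1 H2 H3 H4] := mpd.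
rewrite [a ^+ 2]expr2 !mulrA.
split.
  move=> [b [c [mpb gpc sab bc]]].
  have E := mp_unique _ _ _ _ _ inv mpd mpb. subst c. rewrite -E in gpc sab.
  have [g1 g2 g3] := gpc.
  have g4 : ad * a * a = a by rewrite -g3 g1.
  have pg4 : forall u, u * ad * a * a = u * a by pre g4.
  have pg3 : forall u, u * ad * a = u * a * ad by pre (esym g3).
  have Ex : a * s a * ad * ad * a * a = a * ad.
    by rewrite sab pg4 pg3 g1.
  have ff : a * ad * (a * ad) = a * ad by rewrite mulrA H1.
  have Pf : is_projection s (a * ad) by [].
  rewrite Ex. split; first by rewrite expr2 ff.
  by rewrite !exprS expr0 mulr1 !ff.
move=> [[P2a P2b] [P3a P3b]].
have [G1 G2 G3] := gpg.
set x := (a * s a * ad * ad * a * a) in P2a P2b P3a P3b *.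
have x23 : x ^+ 2 = x ^+ 3.
  transitivity (x ^+ 2 * x ^+ 2 * x ^+ 2); first by rewrite !P2a.
  by rewrite -!exprD -P3a -exprD.
have F1 : a * a * ag = a by rewrite -mulrA G3 mulrA G1.
have F2 : ag * a * a = a by rewrite -G3 G1.
have F3 : s a * a * ad = s a by rewrite -mulrA -H3 -sM H1.
have F4 : ad * a * s a = s a by rewrite -H4 -sM mulrA H1.
have F5 : s a * s ad = ad * a by rewrite -sM H4.
have A : s a * s ad * ad = ad by rewrite F5 H2.
have F6 : s (a * ag) * ad = ad by rewrite -{1}A !mulrA -sM mulrA F1 A.
have F7 : s (a * ag) * a * ad = s (a * ag) by rewrite -mulrA -H3 -sM mulrA H1.
have F10 : s ad * ad * a * s a = a * ad by rewrite -(mulrA _ ad) -(mulrA _ (ad * a)) F4 -sM H3.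
have pF10 : forall u, u * s ad * ad * a * s a = u * a * ad by pre F10.
have pF7 : forall u, u * s (a * ag) * a * ad = u * s (a * ag) by pre F7.
have pF6 : forall u, u * s (a * ag) * ad = u * ad by pre F6.
have pH1 : forall u, u * a * ad * a = u * a by pre H1.
set z := ag * ag * (a * s (a * ag)) * (a * s (a * ag)) * (s ad * ad).
have Zx : z * x = a * ag.
  rewrite /z /x !mulrA pF10 pF7 pF6 pF7 pF6 pH1 -[ag * ag * a]mulrA -mulrA F2 G3 //.
have ex : a * ag * x = x by rewrite /x !mulrA G1.
have xx : x * x = x.
  have : z * x ^+ 2 = z * x ^+ 3 by rewrite x23.
  rewrite !exprS expr0 !mulr1 !(mulrA z x) Zx !(mulrA (a * ag) x) ex.
  by move=> E; rewrite -E.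
have sx : s x = x by rewrite expr2 xx in P2b.
have px : a * ad * x = x by rewrite /x !mulrA H1.
have xp : x * (a * ad) = x by rewrite -{1}sx -H3 -sM px sx.
have ep : a * ag = a * ad.
  by rewrite -Zx -{1}xp mulrA Zx mulrA G1.
have E : ag = ad.
  apply: (mp_unique _ _ _ _ _ inv _ mpd); split => //.
    by rewrite ep H3.
  by rewrite -G3 ep H3.
subst ag.
have pF2 : forall u, u * ad * a * a = u * a by pre F2.
have pG3 : forall u, u * ad * a = u * a * ad by pre (esym G3).
have pF3 : forall u, u * s a * a * ad = u * s a by pre F3.
have Ex : x = a * s a by rewrite /x pF2 pG3 pF3.
have pF5 : forall u, u * s a * s ad = u * (ad * a) by pre F5.
have tt : a * s a * (s ad * ad) = a * ad by rewrite !mulrA pF5 !mulrA H1.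
have ts : a * s a = a * ad.
  transitivity (a * s a * (a * s a * (s ad * ad))).
    by rewrite tt !mulrA pF3.
  by rewrite mulrA -Ex xx Ex tt.
have sa : s a = ad by rewrite -F4 -mulrA ts mulrA H2.
by exists ad, ad; split.
Qed.
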